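(* Let $\psi:[0,T]\times\overline{\mathcal O}\to\mathbb R$ be bounded Borel and let $(\psi_n)$ be a nonincreasing sequence of continuous functions on $[0,T]\times\overline{\mathcal O}$ converging pointwise to $\psi^*$. Then $V[\psi_n]$ is nonincreasing in $n$ and converges pointwise to $V[\psi^*]$, where $V[\Phi](t,x)=\inf_{\alpha\in L^2(t,T;\mathbb R^m)}\sup_{\theta\in[t,T]}\{\frac12\int_t^\theta|\alpha_s|^2ds+\Phi(\theta,Y^{t,x,\alpha}_\theta)\}$.
   Context: Standing assumptions: $\mathcal O\subset\mathbb R^d$ bounded open of class $W^{2,\infty}$ with outward normal $n$; $\gamma$ Lipschitz with $\gamma\cdot n\ge c_0>0$ on $\partial\mathcal O$; $b,\sigma$ continuous on $[0,T]\times\overline{\mathcal O}$, Lipschitz in space uniformly in time. $Y^{t,x,\alpha}$: solution on $[t,T]$ of $Y_s=x+\int_t^s(b(u,Y_u)-\sigma(u,Y_u)\alpha_u)du-z_s$, $Y_s\in\overline{\mathcal O}$, $z_s=\int_t^s1_{\partial\mathcal O}(Y_u)\gamma(Y_u)d|z|_u$. $\psi^*$ is the upper semicontinuous envelope of $\psi$. *)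

(* Defs.v *)
From HB Require Import structures.
From mathcomp Require Import all_boot all_order all_algebra.
From mathcomp Require Import all_classical all_reals all_analysis.
Set Implicit Arguments. Unset Strict Implicit. Unset Printing Implicit Defensive.
Import Order.TTheory GRing.Theory Num.Theory.
Import numFieldNormedType.Exports.
Local Open Scope classical_set_scope.
Local Open Scope ring_scope.

Section defs.
Context {R : realType}.

Definition sqn {k : nat} (v : 'rV[R]_k) : R := \sum_(i < k) v 0 i ^+ 2.
Definition enorm {k : nat} (v : 'rV[R]_k) : R := Num.sqrt (sqn v).
Definition dotv {k : nat} (u v : 'rV[R]_k) : R := \sum_(i < k) u 0 i * v 0 i.
Definition mxnorm {p q : nat} (M : 'M[R]_(p, q)) : R :=
  Num.sqrt (\sum_(i < p) \sum_(j < q) M i j ^+ 2).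

Definition boundary {d : nat} (O : set 'rV[R]_d) : set 'rV[R]_d :=
  closure O `\` O.

Definition lipschitz_on {k l : nat} (A : set 'rV[R]_k) (f : 'rV[R]_k -> 'rV[R]_l) :=
  exists L : R, forall x y, A x -> A y -> enorm (f x - f y) <= L * enorm (x - y).

(** O is a domain of class W^{2,oo} (= C^{1,1}) with outward unit normal n:
    O = {rho < 0} for a C^1 function rho with Lipschitz gradient g, g <> 0 on
    {rho = 0}, and n = g/|g| on the boundary. *)
Definition W2inf_domain {d : nat} (O : set 'rV[R]_d) (n : 'rV[R]_d -> 'rV[R]_d) :=
  exists (rho : 'rV[R]_d -> R) (g : 'rV[R]_d -> 'rV[R]_d),
    [/\ (forall x v, is_derive x v rho (dotv (g x) v)),
        lipschitz_on setT g,
        O = [set x | rho x < 0],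
        (forall x, rho x = 0 -> g x != 0) &
        (forall x, boundary O x -> n x = (enorm (g x))^-1 *: g x)].

Definition dom {d : nat} (T : R) (O : set 'rV[R]_d) : set (R * 'rV[R]_d) :=
  [set p | 0 <= p.1 <= T /\ closure O p.2].

Definition standing {d m : nat} (T : R) (O : set 'rV[R]_d)
    (n gam : 'rV[R]_d -> 'rV[R]_d) (b : R -> 'rV[R]_d -> 'rV[R]_d)
    (sig : R -> 'rV[R]_d -> 'M[R]_(d, m)) :=
  [/\ open O, bounded_set O, W2inf_domain O n &
      lipschitz_on (closure O) gam] /\
  [/\
      (exists c0 : R, 0 < c0 /\ forall x, boundary O x -> c0 <= dotv (gam x) (n x)),
      {within dom T O, continuous (fun p => b p.1 p.2)},
      {within dom T O, continuous (fun p => sig p.1 p.2)} &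
      (exists L : R, forall s x y, 0 <= s <= T -> closure O x -> closure O y ->
          enorm (b s x - b s y) <= L * enorm (x - y) /\
          mxnorm (sig s x - sig s y) <= L * enorm (x - y))].

Definition tv {d : nat} (z : R -> 'rV[R]_d) (a b : R) : \bar R :=
  ereal_sup [set e | exists (N : nat) (p : nat -> R),
     [/\ p 0%N = a, p N = b, (forall k, (k < N)%N -> p k <= p k.+1) &
         e = (\sum_(k < N) enorm (z (p k.+1) - z (p k)))%:E]].

Definition L2 {m : nat} (t T : R) (alpha : R -> 'rV[R]_m) :=
  (forall i : 'I_m, measurable_fun (`[t, T] : set (measurableTypeR R))
                                   (fun s => alpha s 0 i)) /\
  (\int[lebesgue_measure]_(s in `[t, T]) (sqn (alpha s))%:E < +oo)%E.

(** Y is a solution on [t,T] of the reflected (Skorokhod) problem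
    Y_s = x + int_t^s (b(u,Y_u) - sig(u,Y_u) alpha_u) du - z_s, Y_s in closure O,
    z_s = int_t^s 1_{boundary O}(Y_u) gam(Y_u) d|z|_u,
    with z continuous of bounded variation, |z| its total variation;
    mu is the Lebesgue-Stieltjes measure d|z| on (t,T]. *)
Definition SP_sol {d m : nat} (O : set 'rV[R]_d) (gam : 'rV[R]_d -> 'rV[R]_d)
    (b : R -> 'rV[R]_d -> 'rV[R]_d) (sig : R -> 'rV[R]_d -> 'M[R]_(d, m))
    (T t : R) (x : 'rV[R]_d) (alpha : R -> 'rV[R]_m) (Y : R -> 'rV[R]_d) :=
  exists z : R -> 'rV[R]_d,
    [/\ {within `[t, T], continuous Y},
        {within `[t, T], continuous z},
        (forall s, t <= s <= T -> closure O (Y s)) &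
        (tv z t T < +oo)%E] /\
    [/\
        (forall s (i : 'I_d), t <= s <= T ->
           (Y s 0 i - x 0 i + z s 0 i)%:E =
           (\int[lebesgue_measure]_(u in `[t, s])
              ((b u (Y u) - alpha u *m (sig u (Y u))^T) 0 i)%:E)%E) &
        exists mu : {measure set (measurableTypeR R) -> \bar R},
          (forall a c, t <= a -> a <= c -> c <= T ->
             mu `]a, c]%classic = (tv z t c - tv z t a)%E) /\
          (forall s (i : 'I_d), t <= s <= T ->
             (z s 0 i)%:E =
             (\int[mu]_(u in `]t, s]) (\1_(boundary O) (Y u) * gam (Y u) 0 i)%:E)%E)].

Definition V {d m : nat} (T : R)
    (Y : R -> 'rV[R]_d -> (R -> 'rV[R]_m) -> R -> 'rV[R]_d)
    (Phi : R * 'rV[R]_d -> R) (t : R) (x : 'rV[R]_d) : \bar R :=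
  ereal_inf [set ereal_sup
     [set ((2^-1)%:E * \int[lebesgue_measure]_(s in `[t, theta]) (sqn (alpha s))%:E
           + (Phi (theta, Y t x alpha theta))%:E)%E | theta in `[t, T]]
   | alpha in L2 t T].

(** upper semicontinuous envelope of psi relative to the set D *)
Definition usc_env {d : nat} (D : set (R * 'rV[R]_d)) (psi : R * 'rV[R]_d -> R)
    (p : R * 'rV[R]_d) : R :=
  fine (ereal_inf [set ereal_sup [set (psi q)%:E | q in U `&` D] | U in nbhs p]).

Definition Borel_on {d : nat} (D : set (R * 'rV[R]_d)) (psi : R * 'rV[R]_d -> R) :=
  forall B : set R, open B -> <<s [set U | open U] >> (D `&` psi @^-1` B).

End defs.

(* Main.v *)
Require Import Defs.
From HB Require Import structures.
From mathcomp Require Import all_boot all_order all_algebra.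
From mathcomp Require Import all_classical all_reals all_analysis.
From mathcomp Require Import lra.
Import Order.TTheory GRing.Theory Num.Theory.
Import numFieldNormedType.Exports.
Local Open Scope classical_set_scope.
Local Open Scope ring_scope.
Lemma dini_lem (R : realType) (A : set R) (hk : nat -> R -> R) (h : R -> R) (c : R) :
  compact A ->
  (forall k th, A th -> hk k @ within A (nbhs th) --> hk k th) ->
  (forall k th, A th -> hk k.+1 th <= hk k th) ->
  (forall th, A th -> hk ^~ th @ \oo --> h th) ->
  (forall th, A th -> h th < c) ->
  \forall k \near \oo, forall th, A th -> hk k th < c.
Proof.
move=> cA hc hmono hcv hlt.
have mono : forall k K th, A th -> (K <= k)%N -> hk k th <= hk K th.
  move=> k K th Ath; elim: k => [|k IH]; first by rewrite leqn0 => /eqP->.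
  rewrite leq_eqVlt => /orP[/eqP->//|]; rewrite ltnS => /IH.
  exact: le_trans (hmono _ _ Ath).
suff: \forall k \near \oo, A `<=` (fun th => A th -> hk k th < c).
  by apply: filterS => k H th Ath; exact: H.
apply: (proj1 (compact_near_coveringP A) cA) => th Ath.
have [K _ HK] := cvgr_lt _ (hcv th Ath) _ (hlt th Ath).
have HKK := HK K (leqnn K).
have HU : \forall t \near within A (nbhs th), hk K t < c.
  exact: (cvgr_lt _ (hc K th Ath) _ HKK).
exists ([set th' | A th' -> hk K th' < c], [set k | (K <= k)%N]).
  split; [exact: HU | by exists K].
move=> [th' k] /= [H1 H2] Ath'.
exact: le_lt_trans (mono k K th' Ath' H2) (H1 Ath').
Qed.
Lemma le_real_gt (R : realType) (x y : \bar R) :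
  (forall r : R, (y < r%:E)%E -> (x <= r%:E)%E) -> (x <= y)%E.
Proof.
case: y => [v| |] H.
- apply/lee_addgt0Pr => e e0; rewrite -EFinD; apply: H.
  by rewrite lte_fin ltrDl.
- by rewrite leey.
- case: x H => [w| |] H //.
  + have := H (w - 1) (ltNyr _); rewrite lee_fin.
    move=> h; exfalso; lra.
  + by have := H 0 (ltNyr _).
Qed.
Theorem mainTheorem13 (R : realType) (d m : nat) (T : R) (O : set 'rV[R]_d)
    (n gam : 'rV[R]_d -> 'rV[R]_d) (b : R -> 'rV[R]_d -> 'rV[R]_d)
    (sig : R -> 'rV[R]_d -> 'M[R]_(d, m))
    (Y : R -> 'rV[R]_d -> (R -> 'rV[R]_m) -> R -> 'rV[R]_d)
    (psi : R * 'rV[R]_d -> R) (psin : nat -> R * 'rV[R]_d -> R) :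
  0 < T ->
  standing T O n gam b sig ->
  (forall t x alpha, 0 <= t <= T -> closure O x -> L2 t T alpha ->
     SP_sol O gam b sig T t x alpha (Y t x alpha)) ->
  (exists M : R, forall p, dom T O p -> `|psi p| <= M) ->
  Borel_on (dom T O) psi ->
  (forall k, {within dom T O, continuous (psin k)}) ->
  (forall k p, dom T O p -> psin k.+1 p <= psin k p) ->
  (forall p, dom T O p -> (fun k => psin k p) @ \oo --> usc_env (dom T O) psi p) ->
  forall t x, 0 <= t <= T -> closure O x ->
    (forall k, (V T Y (psin k.+1) t x <= V T Y (psin k) t x)%E) /\
    (fun k => V T Y (psin k) t x) @ \oo --> V T Y (usc_env (dom T O) psi) t x.
Proof.
move=> T0 Hst HY [M HM] Hborel Hcont Hmono Hlim t x ht xO.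
have /andP[t0 tT] := ht.
set A : set R := [set` `[t, T]].
have domA : forall alpha, L2 t T alpha -> forall th, A th -> dom T O (th, Y t x alpha th).
  move=> alpha La th Ath.
  have /andP[th1 th2] : t <= th <= T by move: Ath; rewrite /A /= in_itv.
  have [z [[_ _ YO _] _]] := HY t x alpha ht xO La.
  split => /=; last by apply: YO; rewrite th1 th2.
  by rewrite (le_trans t0 th1) th2.
have Vmono : forall Phi1 Phi2 : R * 'rV[R]_d -> R,
    (forall p, dom T O p -> Phi1 p <= Phi2 p) ->
    (V T Y Phi1 t x <= V T Y Phi2 t x)%E.
  move=> Phi1 Phi2 H; apply: le_ereal_inf_tmp => _ [alpha La <-].
  apply: ge_ereal_inf; eexists; first by exists alpha.
  apply: ge_ereal_sup => _ [th Ath <-].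
  apply: le_ereal_sup_tmp; eexists; first by exists th.
  by apply: leeD => //; rewrite lee_fin; apply: H; apply: domA.
have Hlb : forall k p, dom T O p -> usc_env (dom T O) psi p <= psin k p.
  move=> k p Dp.
  have E : limn (fun k => psin k p) = usc_env (dom T O) psi p.
    by apply: cvg_lim; last exact: (Hlim p Dp).
  rewrite -E.
  apply: nonincreasing_cvgn_ge; last by apply/cvg_ex; eexists; exact: (Hlim p Dp).
  by apply/nonincreasing_seqP => j; exact: Hmono.
split; first by move=> k; apply: Vmono => p Dp; exact: Hmono.
pose SS := fun (Phi : R * 'rV[R]_d -> R) (alpha : R -> 'rV[R]_m) =>
  ereal_sup [set ((2^-1)%:E * \int[lebesgue_measure]_(s in `[t, theta]) (sqn (alpha s))%:E
           + (Phi (theta, Y t x alpha theta))%:E)%E | theta in `[t, T]].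
have VE : forall Phi, V T Y Phi t x = ereal_inf [set SS Phi alpha | alpha in L2 t T] by [].
have core : forall alpha, L2 t T alpha -> forall r : R,
    (SS (usc_env (dom T O) psi) alpha < r%:E)%E ->
    \forall k \near \oo, (V T Y (psin k) t x <= r%:E)%E.
  move=> alpha La r Hr.
  have [z [[Ycont _ YO _] _]] := HY t x alpha ht xO La.
  pose Ya := Y t x alpha.
  pose g := fun s => sqn (alpha s).
  have g0 : forall s, 0 <= g s by move=> s; apply: sumr_ge0 => i _; exact: sqr_ge0.
  have mg : measurable_fun `[t, T] g.
    rewrite /g /sqn; apply: measurable_sum => i; apply: measurable_realfun.measurable_funX; exact: La.1 i.
  have ig : lebesgue_measure.-integrable `[t, T] (EFin \o g).
    apply/integrableP; split; first exact/measurable_realfun.measurable_EFinP.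
    apply: le_lt_trans La.2; rewrite le_eqVlt; apply/orP; left; apply/eqP.
    apply: eq_integral => s _; rewrite /comp gee0_abs // lee_fin; exact: g0.
  pose F := fun th => parameterized_integral lebesgue_measure t th g.
  have IF : forall th, A th ->
      (\int[lebesgue_measure]_(s in `[t, th]) (sqn (alpha s))%:E)%E = (F th)%:E.
    move=> th Ath.
    have /andP[th1 th2] : t <= th <= T by move: Ath; rewrite /A /= in_itv.
    rewrite /F /parameterized_integral /Rintegral fineK //.
    apply: integrable_fin_num => //; apply: integrableS ig => //.
    by apply: subset_itvl; rewrite bnd_simp.
  have Fc : forall th, A th -> F @ within A (nbhs th) --> F th.
    exact: (subspace_continuousP _ _).1 (parameterized_integral_continuous tT ig).
  pose hk := fun k th => 2^-1 * F th + psin k (th, Ya th).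
  pose h := fun th => 2^-1 * F th + usc_env (dom T O) psi (th, Ya th).
  have Eterm : forall (Phi : R * 'rV_d -> R) th, A th ->
      ((2^-1)%:E * \int[lebesgue_measure]_(s in `[t, th]) (sqn (alpha s))%:E
        + (Phi (th, Ya th))%:E)%E = (2^-1 * F th + Phi (th, Ya th))%:E.
    by move=> Phi th Ath; rewrite IF // -EFinM -EFinD.
  have At : A t by rewrite /A /= in_itv /= lexx tT.
  have Hge : ((h t)%:E <= SS (usc_env (dom T O) psi) alpha)%E.
    apply: ereal_sup_ubound; exists t => //; exact: Eterm.
  have Sfin : SS (usc_env (dom T O) psi) alpha \is a fin_num.
    rewrite fin_numE; apply/andP; split.
      by rewrite -ltNye (lt_le_trans (ltNyr _) Hge).
    by rewrite lt_eqF // (lt_trans Hr (ltry r)).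
  pose s := fine (SS (usc_env (dom T O) psi) alpha).
  have Es : SS (usc_env (dom T O) psi) alpha = s%:E by rewrite /s fineK.
  have sr : s < r by rewrite -lte_fin -Es.
  pose c := (s + r) / 2.
  have [sc cr] := midf_lt sr.
  have hlt : forall th, A th -> h th < c.
    move=> th Ath; apply: le_lt_trans sc; rewrite -lee_fin -Es.
    rewrite -[X in (X <= _)%E](Eterm (usc_env (dom T O) psi) th Ath).
    by apply: ereal_sup_ubound; exists th.
  have hc : forall k th, A th -> hk k @ within A (nbhs th) --> hk k th.
    move=> k th Ath.
    apply: (cvgD (f := fun th' => 2^-1 * F th') (g := fun th' => psin k (th', Ya th'))).
      exact: cvgMl_tmp (Fc th Ath).
    have Hp := (subspace_continuousP _ _).1 (Hcont k) _ (domA alpha La th Ath).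
    have Hphi : (fun th' => (th', Ya th')) @ within A (nbhs th) -->
                within (dom T O) (nbhs (th, Ya th)).
      have H1 : (fun th' => (th', Ya th')) @ within A (nbhs th) --> (th, Ya th).
        have Hy : Ya @ within A (nbhs th) --> Ya th.
          exact: (subspace_continuousP _ _).1 Ycont th Ath.
        exact: (cvg_pair (f := fun th' : R => th') (g := Ya) (cvg_within (F := nbhs th) A) Hy).
      move=> U /= HU.
      have W1 := H1 _ HU.
      have W2 : within A (nbhs th) A by apply: withinT.
      change (within A (nbhs th) (fun th' => U (th', Ya th'))).
      refine (@filterS2 _ (within A (nbhs th)) _ _ _ _ _ W1 W2).
      move=> th' /= H Ath'.
      exact: H (domA alpha La th' Ath').
    exact: cvg_comp Hphi Hp.
  have hmono : forall k th, A th -> hk k.+1 th <= hk k th.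
    by move=> k th Ath; rewrite /hk lerD2l; exact: Hmono _ _ (domA alpha La th Ath).
  have hcv : forall th, A th -> hk ^~ th @ \oo --> h th.
    move=> th Ath.
    apply: (cvgD (f := fun _ => 2^-1 * F th) (g := fun k => psin k (th, Ya th))).
      exact: cvg_cst.
    exact: Hlim _ (domA alpha La th Ath).
  have cA : compact A by exact: segment_compact.
  have Hd := @dini_lem R A hk h c cA hc hmono hcv hlt.
  apply: filterS Hd => k Hk.
  apply: ge_ereal_inf; exists (SS (psin k) alpha); first by exists alpha.
  apply: ge_ereal_sup => _ [th Ath <-]; rewrite Eterm // lee_fin.
  exact/ltW/(lt_trans (Hk th Ath) cr).
have nonincr : nonincreasing_seq (fun k => V T Y (psin k) t x).
  by apply/nonincreasing_seqP => j; apply: Vmono => p Dp; exact: Hmono.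
have cv := ereal_nonincreasing_cvgn nonincr.
suff <- : ereal_inf ((fun k => V T Y (psin k) t x) @` setT) =
          V T Y (usc_env (dom T O) psi) t x by [].
apply/eqP; rewrite eq_le; apply/andP; split.
- apply: le_real_gt => r Hr.
  rewrite VE in Hr.
  have [_ [alpha La <-] Hlt] := ereal_inf_lt Hr.
  have [K _ HK] := core alpha La r Hlt.
  apply: ge_ereal_inf; exists (V T Y (psin K) t x); first by exists K.
  exact: HK K (leqnn K).
- apply: le_ereal_inf_tmp => _ [k _ <-]; apply: Vmono => p Dp; exact: Hlb.
Qed.
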